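(* Let $\varphi:X\to\mathbb R$ be Lipschitz continuous, let $u:X\to\mathbb R$ be a calibrated subaction of $\varphi$ and $\underline{y}^{(0)}\in X$. For each $n\ge1$ let $\underline{y}^{(-n)}$ be a point with $\sigma(\underline{y}^{(-n)})=\underline{y}^{(-n+1)}$ and $u(\underline{y}^{(-n+1)})=\varphi(\underline{y}^{(-n)})+u(\underline{y}^{(-n)})-\alpha_\varphi$. Then every accumulation point of $\{\underline{y}^{(-n)}\}_{n\ge1}$ belongs to $\Omega_\varphi$.
   Context: $X=[0,1]^{\mathbb N_0}$ with metric $d_X(\underline{x},\underline{y})=\sum_{i\ge0}|x_i-y_i|/2^{i+1}$ and shift $\sigma(\underline{x})_i=x_{i+1}$. $\alpha_\varphi=\inf_\mu\int\varphi\,d\mu$ over $\sigma$-invariant Borel probability measures. $B(\underline{x},\underline{y},n;\varepsilon)=\{\underline{z}: d_X(\underline{x},\underline{z})<\varepsilon,\ d_X(\sigma^n\underline{z},\underline{y})<\varepsilon\}$. Mañé potential $S_\varphi(\underline{x},\underline{y})=\lim_{\varepsilon\to0}\inf\{\sum_{i=0}^{n-1}(\varphi(\sigma^i\underline{z})-\alpha_\varphi): n\in\mathbb N,\ \underline{z}\in B(\underline{x},\underline{y},n;\varepsilon)\}$; Aubry set $\Omega_\varphi=\{\underline{x}: S_\varphi(\underline{x},\underline{x})=0\}$. A subaction is a continuous $u$ with $u(\underline{x})+\varphi(\underline{x})\ge u(\sigma\underline{x})+\alpha_\varphi$ for all $\underline{x}$; it is calibrated if $\min_{\sigma(\underline{y})=\underline{x}}(\varphi(\underline{y})+u(\underline{y}))=u(\underline{x})+\alpha_\varphi$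 for every $\underline{x}$. *)

(* Defs.v *)
From HB Require Import structures.
From mathcomp Require Import all_boot all_order all_algebra.
From mathcomp Require Import all_classical all_reals all_analysis.
Set Implicit Arguments. Unset Strict Implicit. Unset Printing Implicit Defensive.
Import Order.TTheory GRing.Theory Num.Theory.
Import numFieldNormedType.Exports.
Local Open Scope classical_set_scope.
Local Open Scope ring_scope.

Section Defs.
Variable R : realType.

Record X := MkX { xs : nat -> R ; xs_in : forall i, 0 <= xs i <= 1 }.

Lemma zero_in_unit (i : nat) : 0 <= (fun _ : nat => 0 : R) i <= 1.
Proof. by rewrite /= lexx ler01. Qed.

HB.instance Definition _ := gen_eqMixin X.
HB.instance Definition _ := gen_choiceMixin X.
HB.instance Definition _ := isPointed.Build X (MkX zero_in_unit).

Definition dX (x y : X) : R :=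
  limn (series (fun i => `|xs x i - xs y i| / 2 ^+ i.+1)).

Lemma shift_in (x : X) i : 0 <= xs x i.+1 <= 1.
Proof. exact: xs_in. Qed.
Definition sshift (x : X) : X := MkX (shift_in x).

Definition dX_open : set (set X) :=
  [set A | forall x, A x -> exists2 e : R, 0 < e & forall y, dX x y < e -> A y].
Definition XB := g_sigma_algebraType dX_open.

Definition invariant_prob (mu : {measure set XB -> \bar R}) : Prop :=
  mu setT = 1%E /\
  forall A : set XB, measurable A -> mu (sshift @^-1` A) = mu A.

Definition alpha_phi (phi : X -> R) : R :=
  fine (ereal_inf [set r | exists mu : {measure set XB -> \bar R},
      invariant_prob mu /\ r = (\int[mu]_x (phi x)%:E)%E]).

Definition dX_continuous (f : X -> R) : Prop :=
  forall x (e : R), 0 < e -> exists2 d : R, 0 < d &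
    forall y, dX x y < d -> `|f x - f y| < e.
Definition dX_lipschitz (f : X -> R) : Prop :=
  exists L : R, forall x y, `|f x - f y| <= L * dX x y.

Definition mane_inf (phi : X -> R) (x y : X) (eps : R) : \bar R :=
  ereal_inf [set r | exists n : nat, exists z : X,
     (0 < n)%N /\ dX x z < eps /\ dX (iter n sshift z) y < eps /\
     r = (\sum_(i < n) (phi (iter i sshift z) - alpha_phi phi))%:E].

Definition mane (phi : X -> R) (x y : X) : \bar R :=
  lim (mane_inf phi x y eps @[eps --> 0^'+]).

Definition aubry (phi : X -> R) : set X := [set x | mane phi x x = 0%E].

Definition subaction (phi u : X -> R) : Prop :=
  dX_continuous u /\
  forall x, u x + phi x >= u (sshift x) + alpha_phi phi.

Definition calibrated_subaction (phi u : X -> R) : Prop :=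
  subaction phi u /\
  forall x, (exists2 y, sshift y = x & phi y + u y = u x + alpha_phi phi) /\
            (forall y, sshift y = x -> phi y + u y >= u x + alpha_phi phi).

Definition accumulation_point (y : nat -> X) (p : X) : Prop :=
  forall (e : R), 0 < e -> forall N : nat, exists n : nat,
    (1 <= n)%N /\ (N <= n)%N /\ dX (y n) p < e.

End Defs.

(* Main.v *)
Require Import Defs.
From HB Require Import structures.
From mathcomp Require Import all_boot all_order all_algebra.
From mathcomp Require Import all_classical all_reals all_analysis.
From mathcomp Require Import ring lra.
Import Order.TTheory GRing.Theory Num.Theory.
Local Open Scope classical_set_scope.
Local Open Scope ring_scope.

Lemma dX_sym (R : realType) (x y : X R) : dX x y = dX y x.
Proof.
rewrite /dX; congr (limn (series _)); apply/funext => i; by rewrite distrC.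
Qed.

Lemma sub_tele (R : realType) (phi u : X R -> R) (a : R) :
  (forall x, u x + phi x >= u (sshift x) + a) ->
  forall z n, \sum_(i < n) (phi (iter i (@sshift R) z) - a) >= u (iter n (@sshift R) z) - u z.
Proof.
move=> Hs z; elim=> [|n IH]; first by rewrite big_ord0 /= subrr.
rewrite big_ord_recr /=.
have := Hs (iter n (@sshift R) z).
move: IH; set s := \sum_(i < n) _; lra.
Qed.

Lemma back_iter (R : realType) (y : nat -> X R) :
  (forall n : nat, (1 <= n)%N -> sshift (y n) = y n.-1) ->
  forall m i, (i <= m)%N -> iter i (@sshift R) (y m) = y (m - i)%N.
Proof.
move=> H m; elim=> [|i IH] Hi; first by rewrite subn0.
by rewrite /= IH ?(ltnW Hi) // H ?subn_gt0 // subnS.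
Qed.

Arguments back_iter {R y}.

Lemma back_tele (R : realType) (phi u : X R -> R) (a : R) (y : nat -> X R) :
  (forall n : nat, (1 <= n)%N ->
     sshift (y n) = y n.-1 /\ u (y n.-1) = phi (y n) + u (y n) - a) ->
  forall m n, (n <= m)%N ->
  \sum_(i < n) (phi (iter i (@sshift R) (y m)) - a) = u (y (m - n)%N) - u (y m).
Proof.
move=> H m; elim=> [|n IH] Hn; first by rewrite big_ord0 subn0 subrr.
rewrite big_ord_recr /= IH ?(ltnW Hn) //.
rewrite (back_iter (fun k hk => (H k hk).1)) ?(ltnW Hn) //.
have [_ E] := H (m - n)%N (ltac:(by rewrite subn_gt0)).
rewrite -subnS in E; rewrite E; lra.
Qed.

Arguments back_tele {R phi u a y}.

Lemma close2 (R : realType) (a b c e : R) :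
  `|a - b| < e / 2 -> `|a - c| < e / 2 -> b - c <= e.
Proof. rewrite !ltr_norml => /andP[h1 h2] /andP[h3 h4]; lra. Qed.

Arguments sub_tele {R phi u a}.

Theorem lemma2p13 (R : realType) (phi u : X R -> R) (y : nat -> X R) :
  dX_lipschitz phi ->
  calibrated_subaction phi u ->
  (forall n : nat, (1 <= n)%N ->
     sshift (y n) = y n.-1 /\
     u (y n.-1) = phi (y n) + u (y n) - alpha_phi phi) ->
  forall p : X R, accumulation_point y p -> aubry phi p.
Proof.
move=> _ [[Hc Hs] _] Hy p Hacc.

have Hup : forall eps e : R, 0 < eps -> 0 < e -> (mane_inf phi p p eps <= e%:E)%E.
  move=> eps e heps he.
  have [d1 hd1 Hd1] := Hc p (e / 2) ltac:(by rewrite divr_gt0).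
  pose r := Num.min eps d1.
  have hr : 0 < r by rewrite lt_min heps hd1.
  have [n1 [h1 [_ Hn1]]] := Hacc r hr 0%N.
  have [n2 [_ [h2 Hn2]]] := Hacc r hr n1.+1.
  have hle : (n2 - n1 <= n2)%N by rewrite leq_subr.
  have Hsum := back_tele Hy n2 (n2 - n1)%N hle.
  have Hit := back_iter (fun k hk => (Hy k hk).1) n2 (n2 - n1)%N hle.
  have e1 : (n2 - (n2 - n1) = n1)%N by rewrite subKn // ltnW.
  rewrite e1 in Hsum Hit.
  apply: ge_ereal_inf; exists (u (y n1) - u (y n2))%:E.
    exists (n2 - n1)%N, (y n2); split; first by rewrite subn_gt0.
    have rle : r <= eps by rewrite /r ge_min lexx.
    split; first by rewrite dX_sym; apply: lt_le_trans Hn2 rle.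
    split; first by rewrite Hit; apply: lt_le_trans Hn1 rle.
    by rewrite Hsum.
  rewrite lee_fin.
  have rle : r <= d1 by rewrite /r ge_min lexx orbT.
  apply: (@close2 R (u p)).
    by apply: Hd1; rewrite dX_sym; apply: lt_le_trans Hn1 rle.
  by apply: Hd1; rewrite dX_sym; apply: lt_le_trans Hn2 rle.
have Hlo : forall e : R, 0 < e -> exists2 d : R, 0 < d &
    forall eps, 0 < eps -> eps < d -> ((- e)%:E <= mane_inf phi p p eps)%E.
  move=> e he.
  have [d1 hd1 Hd1] := Hc p (e / 2) ltac:(by rewrite divr_gt0).
  exists d1 => // eps heps hed.
  apply: le_ereal_inf_tmp => _ [n [z [hn [hz1 [hz2 ->]]]]].
  rewrite lee_fin.
  have := sub_tele Hs z n.
  have : u z - u (iter n (@sshift R) z) <= e.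
    apply: (@close2 R (u p)); apply: Hd1.
      exact: lt_trans hz1 hed.
    by rewrite dX_sym; exact: lt_trans hz2 hed.
  lra.
have [d0 hd0 Hd0] := Hlo 1 ltr01.
rewrite /aubry /mane /=.
apply: cvg_lim => //.
apply/fine_cvgP; split.
  near=> eps.
  have h0 : 0 < eps by near: eps; exact: nbhs_right_gt.
  have hd : eps < d0 by near: eps; exact: nbhs_right_lt.
  move: (Hd0 eps h0 hd) (Hup eps 1 h0 ltr01).
  by case: (mane_inf phi p p eps).
apply/cvgrPdist_le => e he.
have [d hd Hd] := Hlo e he.
near=> eps.
have h0 : 0 < eps by near: eps; exact: nbhs_right_gt.
have hdd : eps < d by near: eps; exact: nbhs_right_lt.
move: (Hd eps h0 hdd) (Hup eps e h0 he).
rewrite /=; case: (mane_inf phi p p eps) => //= r.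
rewrite !lee_fin sub0r normrN => h1 h2.
by rewrite ler_norml h1 h2.
Unshelve. all: by end_near.
Qed.
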